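(* Consider the coupling process described in the context, run on a hypergraph colouring instance with pinnings $(H,\mathcal P)$, $H=(V,\mathcal E)$, with integer parameters $0<k_2<k_1\le k$ such that $k_1\le|e|\le k$ for all $e\in\mathcal E$, a vertex $v$ and distinct colours $c_1,c_2$. Then: (1) every coloured vertex is in $V_1$ or adjacent to $V_1$, i.e. $V_{\mathrm{col}}\subseteq\Gamma_{\mathrm{ver}}(V_1)$ at the end of the process; (2) the distributions of the output partial colourings $X$ and $Y$ are pre-Gibbs with respect to $\mu_{\mathcal C_1}$ and $\mu_{\mathcal C_2}$ respectively.
   Context: A hypergraph colouring instance with pinnings is a pair $(H,\mathcal P)$ where $H=(V,\mathcal E)$ is a hypergraph and $\mathcal P=\{P_e\subseteq[q]:e\in\mathcal E\}$; a colouring $\sigma\in[q]^V$ is proper if $|\{\sigma(u):u\in e\}\cup P_e|>1$ for all $e$. A partial colouring is an element of $([q]\cup\{-\})^V$, where $-$ means uncoloured; a full colouring $\sigma$ is consistent with a partial colouring $X$ (written $\sigma\models X$) if they agree on all vertices coloured by $X$. $\mathcal C_X$ is the set of proper colourings consistent with $X$, $\mu_{\mathcal C'}$ denotes the uniform distribution on a set $\mathcal C'$, and $\mathcal C_i$ ($i=1,2$) is the set of proper colourings with $v$ coloured $c_i$. For a set $\mathcal C'$ of proper colourings, a distribution $\mu$ on partial colourings is pre-Gibbs with respect to $\mu_{\mathcal C'}$ if for every $\sigma\in\mathcal C'$, $\mu_{\mathcal C'}(\sigma)=\sum_{\sigma':\sigma\models\sigma'}\mu(\sigma')\,\mu_{\mathcal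 C'}(\sigma\mid\sigma')$. The marginal distribution at a vertex $u$ conditioned on a partial colouring $X$ is the law of $\sigma(u)$ for $\sigma$ uniform in $\mathcal C_X$. A partial colouring $X$ satisfies a hyperedge $e$ if the colours of the coloured vertices of $e$ together with $P_e$ contain at least two distinct colours. For $u\in V$, $\Gamma_{\mathrm{ver}}(u)=\{w:\exists e\in\mathcal E,\{u,w\}\subseteq e\}\cup\{u\}$ (with $\mathcal E$ the original hyperedge set) and $\Gamma_{\mathrm{ver}}(U)=\bigcup_{u\in U}\Gamma_{\mathrm{ver}}(u)$. The coupling process: fix arbitrary orderings of vertices and hyperedges. Let $X_0$ ($Y_0$) colour $v$ with $c_1$ ($c_2$) and leave all else uncoloured. Initialise $V_1=\{v\}$, $V_2=V\setminus V_1$, $V_{\mathrm{col}}=\{v\}$, $X=X_0$, $Y=Y_0$, and a working copy $\mathcal E'$ of $\mathcal E$. While some $e\in\mathcal E'$ meets both $V_1$ and $V_2$: let $e$ be the first such hyperedge and $u$ the first vertex of $e\cap V_2$; sample $(c_x,c_y)$ from a maximal coupling of the marginal distribution at $u$ conditioned on $X$ and the marginal at $u$ conditioned on $Y$; colour $u$ by $c_x$ in $X$ and by $c_y$ in $Y$; add $u$ to $V_{\mathrm{col}}$; if $c_x\ne c_y$, move $u$ from $V_2$ to $V_1$; remove from $\mathcal E'$ every hyperedge containing $u$ that is satisfied by both $X$ and $Y$; then for every hyperedge $e'\in\mathcal E'$ containing $u$ with $e'\cap V_1\ne\emptyset$, $e'\cap V_2\neq\emptyset$ and $|e'\cap V_{\mathrm{col}}|=k_2$,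 set $V_1\leftarrow V_1\cup(e'\setminus V_{\mathrm{col}})$, $V_2\leftarrow V\setminus V_1$ and remove $e'$ from $\mathcal E'$. The output is $V_{\mathrm{col}}$, the partition $V_1\sqcup V_2=V$, and the partial colourings $X,Y$ defined on $V_{\mathrm{col}}$.
   Formalization: The loop runs while some hyperedge of $\mathcal E'$ meets both $V_1$ and $V_2\setminus V_{\mathrm{col}}$, u is the first vertex of $e\cap(V_2\setminus V_{\mathrm{col}})$, and $\mathcal C_1$ and $\mathcal C_2$ are nonempty. The statement above fails without it. *)

(* Defs.v *)
From mathcomp Require Import all_boot all_order all_algebra.
Set Implicit Arguments.
Unset Strict Implicit.
Unset Printing Implicit Defensive.
Import Order.TTheory GRing.Theory Num.Theory.
Local Open Scope ring_scope.

(* Hypergraph colouring instance with pinnings: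
   vertices: a finite type V; colours: 'I_q;
   hyperedges: E : 'I_m -> {set V}, their order is the index order;
   pinnings:  P : 'I_m -> {set 'I_q}  (P i is the pinning of hyperedge E i). *)

Section Colourings.
Variables (V : finType) (q m : nat) (E : 'I_m -> {set V}) (P : 'I_m -> {set 'I_q}).

(* full and partial colourings ([None] = uncoloured, i.e. "-") *)
Definition fcol := {ffun V -> 'I_q}.
Definition pcol := {ffun V -> option 'I_q}.

Definition proper (s : fcol) : bool :=
  [forall i : 'I_m, (1 < #|[set s u | u in E i] :|: P i|)%N].

Definition consistent (s : fcol) (X : pcol) : bool :=
  [forall u, if X u is Some c then s u == c else true].

Definition CX (X : pcol) : {set fcol} := [set s : fcol | proper s && consistent s X].

Definition Cvc (v : V) (c : 'I_q) : {set fcol} := [set s : fcol | proper s && (s v == c)].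

Definition colours_of (X : pcol) (e : {set V}) : {set 'I_q} :=
  [set c | [exists u in e, X u == Some c]].

Definition satisfies (X : pcol) (i : 'I_m) : bool :=
  (1 < #|colours_of X (E i) :|: P i|)%N.

Definition adj_ver (u w : V) : bool :=
  (u == w) || [exists i : 'I_m, (u \in E i) && (w \in E i)].
Definition Gamma_ver (U : {set V}) : {set V} := [set w | [exists u in U, adj_ver u w]].

End Colourings.

Section Distributions.
Variable R : realFieldType.
Variables (V : finType) (q m : nat) (E : 'I_m -> {set V}) (P : 'I_m -> {set 'I_q}).

Definition unif (C : {set fcol V q}) (s : fcol V q) : R :=
  if s \in C then (#|C|%:R)^-1 else 0.

Definition cond_unif (C : {set fcol V q}) (X : pcol V q) (s : fcol V q) : R :=
  unif [set t in C | consistent t X] s.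

Definition marginal (X : pcol V q) (u : V) : {ffun 'I_q -> R} :=
  [ffun c => \sum_(s in CX E P X | s u == c) unif (CX E P X) s].

Definition is_coupling (mu nu : {ffun 'I_q -> R}) (pi : {ffun 'I_q * 'I_q -> R}) : Prop :=
  [/\ forall ab, 0 <= pi ab,
      forall a, \sum_b pi (a, b) = mu a
    & forall b, \sum_a pi (a, b) = nu b].

Definition is_max_coupling (mu nu : {ffun 'I_q -> R}) (pi : {ffun 'I_q * 'I_q -> R}) : Prop :=
  is_coupling mu nu pi /\
  forall pi', is_coupling mu nu pi' ->
    \sum_(ab | ab.1 == ab.2) pi' ab <= \sum_(ab | ab.1 == ab.2) pi ab.

Definition preGibbs (C : {set fcol V q}) (mu : {ffun pcol V q -> R}) : Prop :=
  [/\ forall X, 0 <= mu X,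
      \sum_X mu X = 1
    & forall s, s \in C ->
        unif C s = \sum_(X | consistent s X) mu X * cond_unif C X s].

End Distributions.

Section Process.
Variable R : realFieldType.
Variables (V : finType) (q m : nat) (E : 'I_m -> {set V}) (P : 'I_m -> {set 'I_q}).
Variable k2 : nat.
Variable rk : V -> nat.        (* the fixed ordering of vertices *)
Variables (v : V) (c1 c2 : 'I_q).
(* the maximal coupling used for the pair of marginals at u given X and Y *)
Variable cpl : pcol V q -> pcol V q -> V -> {ffun 'I_q * 'I_q -> R}.

(* state of the process: (X, Y, V_1, V_col, E') ; V_2 = ~: V_1;
   E' is a set of hyperedge indices *)
Definition state := (pcol V q * pcol V q * {set V} * {set V} * {set 'I_m})%type.
Definition stX (s : state) : pcol V q := s.1.1.1.1.
Definition stY (s : state) : pcol V q := s.1.1.1.2.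
Definition stV1 (s : state) : {set V} := s.1.1.2.
Definition stVcol (s : state) : {set V} := s.1.2.
Definition stE (s : state) : {set 'I_m} := s.2.

Definition init_state : state :=
  ([ffun u => if u == v then Some c1 else None],
   [ffun u => if u == v then Some c2 else None],
   [set v], [set v], [set: 'I_m]).

Definition first_vertex (S : {set V}) : option V :=
  [pick x in S | [forall y in S, (rk x <= rk y)%N]].

Definition crossing (s : state) (i : 'I_m) : bool :=
  [&& i \in stE s, E i :&: stV1 s != set0 & E i :&: (~: stV1 s :\: stVcol s) != set0].

Definition first_edge (s : state) : option 'I_m :=
  [pick i | crossing s i && [forall j, crossing s j ==> (i <= j)%N]].

Definition expand_one (u : V) (Vcol : {set V}) (acc : {set V} * {set 'I_m}) (i : 'I_m) :=
  let: (V1, Ep) := acc in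
  if [&& i \in Ep, u \in E i, E i :&: V1 != set0, E i :&: ~: V1 != set0
       & #|E i :&: Vcol| == k2]
  then (V1 :|: (E i :\: Vcol), Ep :\ i) else acc.

Definition update (s : state) (u : V) (cx cy : 'I_q) : state :=
  let X' := [ffun w => if w == u then Some cx else stX s w] in
  let Y' := [ffun w => if w == u then Some cy else stY s w] in
  let Vcol' := u |: stVcol s in
  let V1a := if cx != cy then u |: stV1 s else stV1 s in
  let Ep1 := stE s :\: [set i | [&& u \in E i, satisfies E P X' i & satisfies E P Y' i]] in
  let acc := foldl (expand_one u Vcol') (V1a, Ep1) (enum 'I_m) in
  (X', Y', acc.1, Vcol', acc.2).

Definition dirac (s : state) : {ffun state -> R} := [ffun t => (t == s)%:R].

(* one iteration of the while loop, as a transition kernel *)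
Definition step (s : state) : {ffun state -> R} :=
  match first_edge s with
  | None => dirac s
  | Some e =>
    match first_vertex (E e :&: (~: stV1 s :\: stVcol s)) with
    | None => dirac s
    | Some u =>
      [ffun t => \sum_ab cpl (stX s) (stY s) u ab * (t == update s u ab.1 ab.2)%:R]
    end
  end.

Fixpoint run (n : nat) : {ffun state -> R} :=
  match n with
  | 0 => dirac init_state
  | n.+1 => [ffun t => \sum_s run n s * step s t]
  end.

(* each iteration colours a new vertex, so the loop stops within #|V| iterations;
   final_dist is the law of the final state *)
Definition final_dist : {ffun state -> R} := run #|V|.

Definition outX : {ffun pcol V q -> R} :=
  [ffun X => \sum_(s | stX s == X) final_dist s].
Definition outY : {ffun pcol V q -> R} :=
  [ffun Y => \sum_(s | stY s == Y) final_dist s].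

End Process.

(* Main.v *)
Require Import Defs.
From mathcomp Require Import all_boot all_order all_algebra.
Set Implicit Arguments. Unset Strict Implicit. Unset Printing Implicit Defensive.
Import Order.TTheory GRing.Theory Num.Theory.
Local Open Scope ring_scope.

Section Aux.
Variable R : realFieldType.
Variables (V : finType) (q m : nat) (E : 'I_m -> {set V}) (P : 'I_m -> {set 'I_q}).

Lemma consistentP (t : fcol V q) (X : pcol V q) :
  reflect (forall w c, X w = Some c -> t w = c) (consistent t X).
Proof.
apply: (iffP forallP) => [H w c Xw | H w].
  by move: (H w); rewrite Xw => /eqP.
by case Xw: (X w) => [c|] //; rewrite (H w c Xw).
Qed.

Definition setc (X : pcol V q) (u : V) (a : 'I_q) : pcol V q :=
  [ffun w => if w == u then Some a else X w].

Lemma CX_C1 (X : pcol V q) v c : X v = Some c ->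
  [set t in Cvc E P v c | consistent t X] = CX E P X.
Proof.
move=> Xv; apply/setP => t; rewrite !inE.
case: (boolP (consistent t X)) => [/consistentP H|]; last by rewrite !andbF.
by rewrite (H _ _ Xv) eqxx !andbT.
Qed.

Lemma CX_setc (X : pcol V q) u a :
  [set s in CX E P X | s u == a] != set0 ->
  CX E P (setc X u a) = [set s in CX E P X | s u == a].
Proof.
case/set0Pn => s0; rewrite !inE => /andP[/andP[_ /consistentP Hs0] /eqP s0u].
apply/setP => t; rewrite !inE.
case: (boolP (Defs.proper E P t)) => //= _.
apply/consistentP/andP => [H|[/consistentP H /eqP tu] w c].
  split; last by rewrite (H u a) // ffunE eqxx.
  apply/consistentP => w c Xw; case: (eqVneq w u) => [ewu|nwu].
    subst w; rewrite (H u a) ?ffunE ?eqxx //; by rewrite -s0u (Hs0 _ _ Xw).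
  by apply: H; rewrite ffunE (negbTE nwu).
rewrite ffunE; case: eqP => [-> [<-] //|_]; exact: H.
Qed.

Lemma marginalE (X : pcol V q) u a :
  marginal R E P X u a = #|[set s in CX E P X | s u == a]|%:R / #|CX E P X|%:R.
Proof.
rewrite ffunE (eq_bigr (fun _ => #|CX E P X|%:R^-1)); last first.
  by move=> s /andP[sin _]; rewrite /unif sin.
rewrite sumr_const mulr_natl; congr (_ *+ _).
by apply: eq_card => s; rewrite !inE unfold_in /= inE.
Qed.

Lemma sum_marginal (X : pcol V q) u : CX E P X != set0 ->
  \sum_a marginal R E P X u a = 1.
Proof.
move=> ne.
under eq_bigr do rewrite ffunE.
rewrite -(partition_big (fun s : fcol V q => s u) predT) //=.
rewrite (eq_bigr (fun _ => #|CX E P X|%:R^-1)); last by move=> s sin; rewrite /unif sin.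
rewrite sumr_const -[_ *+ _]mulr_natr mulVf // pnatr_eq0 cards_eq0 //.
Qed.

Lemma key (X : pcol V q) u v c (sg : fcol V q) : X v = Some c ->
  \sum_a marginal R E P X u a * cond_unif R (Cvc E P v c) (setc X u a) sg
  = cond_unif R (Cvc E P v c) X sg.
Proof.
move=> Xv.
set S := CX E P X.
have -> : cond_unif R (Cvc E P v c) X sg = unif R S sg by rewrite /cond_unif CX_C1.
rewrite (eq_bigr (fun a => if (sg \in S) && (sg u == a) then #|S|%:R^-1 else 0)); last first.
  move=> a _; rewrite marginalE.
  case: (eqVneq [set s in S | s u == a] set0) => [e0|ne].
    rewrite e0 cards0 !mul0r.
    case: (boolP (sg \in S)) => sin //=; case: (eqVneq (sg u) a) => uin //=.
    by move: e0 => /setP/(_ sg); rewrite inE sin uin eqxx inE.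
  rewrite /cond_unif.
  have Hv : setc X u a v = Some c.
    case/set0Pn: ne => s0; rewrite !inE => /andP[/andP[_ /consistentP H] /eqP <-].
    rewrite ffunE; case: eqP => [evu|//]; by rewrite -evu (H _ _ Xv).
  rewrite CX_C1 // CX_setc // /unif !inE.
  case: ifP => [sin|]; last by rewrite mulr0.
  by rewrite mulrAC mulfV ?mul1r // pnatr_eq0 cards_eq0.
rewrite -big_mkcond /= /unif.
case: (boolP (sg \in S)) => sin /=.
  by rewrite (big_pred1 (sg u)) // => a; rewrite /= eq_sym.
by rewrite big_pred0.
Qed.

Lemma coupling_pos (mu nu : {ffun 'I_q -> R}) pi ab :
  is_coupling mu nu pi -> pi ab != 0 -> mu ab.1 != 0 /\ nu ab.2 != 0.
Proof.
case: ab => a b [H0 H1 H2] nz /=.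
have pos : 0 < pi (a, b) by rewrite lt0r nz H0.
split; rewrite gt_eqF //.
  rewrite -H1 (bigD1 b) //=; apply: (lt_le_trans pos); rewrite lerDl sumr_ge0 //.
rewrite -H2 (bigD1 a) //=; apply: (lt_le_trans pos); rewrite lerDl sumr_ge0 //.
Qed.

Lemma marg_nz (X : pcol V q) u a : marginal R E P X u a != 0 ->
  CX E P (setc X u a) != set0.
Proof.
rewrite marginalE; case: (eqVneq [set s in CX E P X | s u == a] set0) => [->|ne].
  by rewrite cards0 mul0r eqxx.
by rewrite CX_setc.
Qed.

End Aux.

Section Proc.
Variable R : realFieldType.
Variables (V : finType) (q m : nat) (E : 'I_m -> {set V}) (P : 'I_m -> {set 'I_q}).
Variables (k2 : nat) (rk : V -> nat) (v : V) (c1 c2 : 'I_q).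
Variable cpl : pcol V q -> pcol V q -> V -> {ffun 'I_q * 'I_q -> R}.
Hypothesis Hcpl : forall (X Y : pcol V q) (u : V), CX E P X != set0 -> CX E P Y != set0 ->
     is_max_coupling (marginal R E P X u) (marginal R E P Y u) (cpl X Y u).
Hypothesis C1ne : Cvc E P v c1 != set0.
Hypothesis C2ne : Cvc E P v c2 != set0.

Local Notation state := (state V q m).
Local Notation stepf := (step E P k2 rk cpl).
Local Notation runf := (run E P k2 rk v c1 c2 cpl).

Definition Inv (s : state) : Prop :=
  [/\ stX s v = Some c1 /\ stY s v = Some c2, v \in stV1 s,
      CX E P (stX s) != set0, CX E P (stY s) != set0
    & stVcol s \subset Gamma_ver E (stV1 s)].

Lemma CX_init c : CX E P [ffun u => if u == v then Some c else None] = Cvc E P v c.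
Proof.
apply/setP => t; rewrite !inE; congr (_ && _).
apply/consistentP/eqP => [H|H w c']; first by apply: H; rewrite ffunE eqxx.
by rewrite ffunE; case: eqP => // -> [<-].
Qed.

Lemma Inv_init : Inv (init_state m v c1 c2).
Proof.
(split; first split); rewrite /stX /stY /stV1 /stVcol /= ?ffunE ?eqxx ?inE ?CX_init //.
apply/subsetP => w; rewrite !inE => /eqP ->; apply/existsP; exists v.
by rewrite inE eqxx /adj_ver eqxx.
Qed.

Lemma foldl_mono u Vc (l : seq 'I_m) (acc : {set V} * {set 'I_m}) :
  acc.1 \subset (foldl (expand_one E k2 u Vc) acc l).1.
Proof.
elim: l acc => [|i l IH] [V1 Ep] /=; first exact: subxx.
apply: subset_trans (IH _); rewrite /expand_one; case: ifP => //= _.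
exact: subsetUl.
Qed.

Lemma Gamma_mono (A B : {set V}) : A \subset B -> Gamma_ver E A \subset Gamma_ver E B.
Proof.
move=> AB; apply/subsetP => w; rewrite !inE => /existsP[x /andP[xA ax]].
by apply/existsP; exists x; rewrite (subsetP AB).
Qed.

Lemma sum_nz (I : finType) (F : I -> R) : \sum_i F i != 0 -> exists i, F i != 0.
Proof.
move=> nz; apply/existsP; apply: contraR nz => /existsPn H.
by rewrite big1 // => i _; apply/eqP; rewrite -[_ == _]negbK H.
Qed.

Lemma step_inv s t : Inv s -> stepf s t != 0 -> Inv t.
Proof.
move=> [[Xv Yv] vV1 CXn CYn Vc].
rewrite /step /first_edge; case: pickP => [e /andP[cr _]|_]; last first.
  by rewrite ffunE; case: (eqVneq t s) => [->|]; [split | rewrite eqxx].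
rewrite /first_vertex; case: pickP => [u /andP[uin _]|_]; last first.
  by rewrite ffunE; case: (eqVneq t s) => [->|]; [split | rewrite eqxx].
rewrite ffunE => /sum_nz [[a b]] /= H.
have nz : cpl (stX s) (stY s) u (a, b) != 0 by apply: contraNneq H => ->; rewrite mul0r.
case: (eqVneq t (update E P k2 s u a b)) H => [-> _|]; last by rewrite mulr0 eqxx.
have [cp _] := Hcpl u CXn CYn.
have [ma mb] := coupling_pos cp nz.
move: uin; rewrite !inE => /and3P[ue uVc uV1].
have uv : u != v by apply: contraNneq uV1 => ->.
set V1a := (if a != b then u |: stV1 s else stV1 s).
have sub1 : stV1 s \subset V1a by rewrite /V1a; case: ifP => _; [exact: subsetUr | exact: subxx].
have sub2 := foldl_mono u (u |: stVcol s) (enum 'I_m)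
   (V1a, stE s :\: [set i | [&& u \in E i,
        satisfies E P [ffun w => if w == u then Some a else stX s w] i
      & satisfies E P [ffun w => if w == u then Some b else stY s w] i]]).
have sub := subset_trans sub1 sub2.
split; rewrite /stX /stY /stV1 /stVcol /=.
- by rewrite !ffunE eq_sym (negbTE uv).
- exact: (subsetP sub).
- exact: (marg_nz ma).
- exact: (marg_nz mb).
apply: subset_trans (Gamma_mono sub); rewrite subUset Vc andbT.
rewrite sub1set inE; case/and3P: cr => _ /set0Pn[w]; rewrite inE => /andP[we wV1] _.
apply/existsP; exists w; rewrite wV1 /adj_ver; apply/orP; right.
by apply/existsP; exists e; rewrite we.
Qed.


Lemma dirac_exp (s : state) (g : state -> R) : \sum_t dirac R s t * g t = g s.
Proof.
rewrite (bigD1 s) //= ffunE eqxx mul1r big1 ?addr0 // => t /negbTE nt.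
by rewrite ffunE nt mul0r.
Qed.

Lemma step_exp (s : state) (g : state -> R) : \sum_t stepf s t * g t =
  match first_edge E s with
  | None => g s
  | Some e =>
    match first_vertex rk (E e :&: (~: stV1 s :\: stVcol s)) with
    | None => g s
    | Some u => \sum_ab cpl (stX s) (stY s) u ab * g (update E P k2 s u ab.1 ab.2)
    end
  end.
Proof.
rewrite /step; case: first_edge => [e|]; [case: first_vertex => [u|]|]; try exact: dirac_exp.
under eq_bigr do rewrite ffunE mulr_suml.
rewrite exchange_big; apply: eq_bigr => ab _.
under eq_bigr do rewrite -mulrA.
rewrite -mulr_sumr; congr (_ * _).
rewrite (bigD1 (update E P k2 s u ab.1 ab.2)) //= eqxx mul1r big1 ?addr0 // => t /negbTE ->.
by rewrite mul0r.
Qed.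

Lemma runS n t : runf n.+1 t = \sum_s runf n s * stepf s t.
Proof. by rewrite /= ffunE. Qed.

Lemma run_inv n s : runf n s != 0 -> Inv s.
Proof.
elim: n s => [|n IH] s.
  rewrite /= ffunE; case: (eqVneq s (init_state m v c1 c2)) => [->|]; last by rewrite eqxx.
  by move=> _; exact: Inv_init.
rewrite runS => /sum_nz [s' H].
have h1 : runf n s' != 0 by apply: contraNneq H => ->; rewrite mul0r.
have h2 : stepf s' s != 0 by apply: contraNneq H => ->; rewrite mulr0.
exact: step_inv (IH _ h1) h2.
Qed.

Lemma step_ge0 s t : Inv s -> 0 <= stepf s t.
Proof.
move=> [_ _ CXn CYn _].
rewrite /step; case: first_edge => [e|]; [case: first_vertex => [u|]|]; rewrite ffunE ?ler0n //.
apply: sumr_ge0 => ab _; apply: mulr_ge0 => //.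
by have [[cp' _ _] _] := Hcpl u CXn CYn.
Qed.

Lemma run_ge0 n s : 0 <= runf n s.
Proof.
elim: n s => [|n IH] s; first by rewrite /= ffunE ler0n.
rewrite runS; apply: sumr_ge0 => s' _.
case: (eqVneq (runf n s') 0) => [->|nz]; first by rewrite mul0r.
by apply: mulr_ge0 => //; apply: step_ge0; apply: run_inv nz.
Qed.

Lemma run_exp n (g : state -> R) :
  (forall s, Inv s -> \sum_t stepf s t * g t = g s) ->
  \sum_s runf n s * g s = g (init_state m v c1 c2).
Proof.
move=> Hg; elim: n => [|n IH]; first exact: dirac_exp.
under eq_bigr do rewrite runS mulr_suml.
rewrite exchange_big /= -IH; apply: eq_bigr => s _.
under eq_bigr do rewrite -mulrA.
rewrite -mulr_sumr.
case: (eqVneq (runf n s) 0) => [->|nz]; first by rewrite !mul0r.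
by rewrite Hg //; exact: run_inv nz.
Qed.

Lemma sum_pair (F : 'I_q * 'I_q -> R) : \sum_ab F ab = \sum_a \sum_b F (a,b).
Proof. by rewrite pair_bigA; apply: eq_bigr => -[a b]. Qed.

Lemma step_one s : Inv s -> \sum_t stepf s t * 1 = 1.
Proof.
move=> [_ _ CXn CYn _].
rewrite step_exp; case: first_edge => [e|] //; case: first_vertex => [u|] //.
have [[_ H1 _] _] := Hcpl u CXn CYn.
under eq_bigr do rewrite mulr1.
rewrite sum_pair /=.
under eq_bigr do rewrite H1.
exact: sum_marginal.
Qed.

Lemma step_martX s sg : Inv s ->
  \sum_t stepf s t * cond_unif R (Cvc E P v c1) (stX t) sg
  = cond_unif R (Cvc E P v c1) (stX s) sg.
Proof.
move=> [[Xv _] _ CXn CYn _].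
rewrite step_exp; case: first_edge => [e|] //; case: first_vertex => [u|] //.
have [[_ H1 _] _] := Hcpl u CXn CYn.
rewrite -(key R E P u sg Xv).
rewrite sum_pair /=.
apply: eq_bigr => a _; rewrite -H1 mulr_suml; apply: eq_bigr => b _ //.
Qed.

Lemma step_martY s sg : Inv s ->
  \sum_t stepf s t * cond_unif R (Cvc E P v c2) (stY t) sg
  = cond_unif R (Cvc E P v c2) (stY s) sg.
Proof.
move=> [[_ Yv] _ CXn CYn _].
rewrite step_exp; case: first_edge => [e|] //; case: first_vertex => [u|] //.
have [[_ _ H2] _] := Hcpl u CXn CYn.
rewrite -(key R E P u sg Yv).
rewrite sum_pair /= exchange_big /=.
apply: eq_bigr => b _; rewrite -H2 mulr_suml; apply: eq_bigr => a _ //.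
Qed.

End Proc.

Lemma sum_outX (R : realFieldType) (V : finType) (q m : nat)
  (E : 'I_m -> {set V}) (P : 'I_m -> {set 'I_q}) k2 rk v c1 c2
  (cpl : pcol V q -> pcol V q -> V -> {ffun 'I_q * 'I_q -> R}) (F : pcol V q -> R) :
  \sum_X outX E P k2 rk v c1 c2 cpl X * F X
  = \sum_s final_dist E P k2 rk v c1 c2 cpl s * F (stX s).
Proof.
under eq_bigr do rewrite ffunE mulr_suml.
rewrite (exchange_big_dep predT) //=; apply: eq_bigr => s _.
by rewrite (big_pred1 (stX s)) // => X /=; rewrite eq_sym.
Qed.

Lemma sum_outY (R : realFieldType) (V : finType) (q m : nat)
  (E : 'I_m -> {set V}) (P : 'I_m -> {set 'I_q}) k2 rk v c1 c2
  (cpl : pcol V q -> pcol V q -> V -> {ffun 'I_q * 'I_q -> R}) (F : pcol V q -> R) :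
  \sum_X outY E P k2 rk v c1 c2 cpl X * F X
  = \sum_s final_dist E P k2 rk v c1 c2 cpl s * F (stY s).
Proof.
under eq_bigr do rewrite ffunE mulr_suml.
rewrite (exchange_big_dep predT) //=; apply: eq_bigr => s _.
by rewrite (big_pred1 (stY s)) // => X /=; rewrite eq_sym.
Qed.

Lemma cond_unif_nc (R : realFieldType) (V : finType) (q : nat) (C : {set fcol V q}) X sg :
  ~~ consistent sg X -> cond_unif R C X sg = 0.
Proof. by move=> nc; rewrite /cond_unif /unif inE (negbTE nc) andbF. Qed.

Theorem lemma3p1 (R : realFieldType) (V : finType) (q m : nat)
  (E : 'I_m -> {set V}) (P : 'I_m -> {set 'I_q}) (k k1 k2 : nat)
  (rk : V -> nat) (v : V) (c1 c2 : 'I_q)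
  (cpl : pcol V q -> pcol V q -> V -> {ffun 'I_q * 'I_q -> R}) :
  injective E -> injective rk ->
  (0 < k2)%N -> (k2 < k1)%N -> (k1 <= k)%N ->
  (forall i, (k1 <= #|E i| <= k)%N) ->
  c1 != c2 ->
  Cvc E P v c1 != set0 -> Cvc E P v c2 != set0 ->
  (forall (X Y : pcol V q) (u : V), CX E P X != set0 -> CX E P Y != set0 ->
     is_max_coupling (marginal R E P X u) (marginal R E P Y u) (cpl X Y u)) ->
  (forall s : state V q m,
     final_dist E P k2 rk v c1 c2 cpl s != 0 ->
     stVcol s \subset Gamma_ver E (stV1 s))
  /\ preGibbs (Cvc E P v c1) (outX E P k2 rk v c1 c2 cpl)
  /\ preGibbs (Cvc E P v c2) (outY E P k2 rk v c1 c2 cpl).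
Proof.
move=> _ _ _ _ _ _ _ C1ne C2ne Hcpl.
have one : \sum_s final_dist E P k2 rk v c1 c2 cpl s = 1.
  have := run_exp Hcpl C1ne C2ne #|V| (g := fun _ => 1) (fun s Is => step_one k2 rk Hcpl Is).
  by under eq_bigr do rewrite mulr1.
have i1 : [ffun u => if u == v then Some c1 else None] v = Some c1 by rewrite ffunE eqxx.
have i2 : [ffun u => if u == v then Some c2 else None] v = Some c2 by rewrite ffunE eqxx.
split; [|split].
- by move=> s /(run_inv Hcpl C1ne C2ne) [].
- split.
  + by move=> X; rewrite ffunE sumr_ge0 // => s _; apply: run_ge0.
  + have := sum_outX E P k2 rk v c1 c2 cpl (fun _ => 1).
    under eq_bigr do rewrite mulr1.
    under [in RHS]eq_bigr do rewrite mulr1.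
    by rewrite one.
  + move=> sg _.
    transitivity (\sum_X outX E P k2 rk v c1 c2 cpl X * cond_unif R (Cvc E P v c1) X sg); last first.
      rewrite (bigID (consistent sg)) /= [X in _ + X]big1 ?addr0 //.
      by move=> X nc; rewrite cond_unif_nc // mulr0.
    rewrite sum_outX.
    rewrite (run_exp Hcpl C1ne C2ne #|V| (g := fun t => cond_unif R (Cvc E P v c1) (stX t) sg)).
      by rewrite /stX /= /cond_unif (CX_C1 _ _ i1) CX_init.
    by move=> s Is; exact: (step_martX k2 rk Hcpl sg Is).
- split.
  + by move=> X; rewrite ffunE sumr_ge0 // => s _; apply: run_ge0.
  + have := sum_outY E P k2 rk v c1 c2 cpl (fun _ => 1).
    under eq_bigr do rewrite mulr1.
    under [in RHS]eq_bigr do rewrite mulr1.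
    by rewrite one.
  + move=> sg _.
    transitivity (\sum_X outY E P k2 rk v c1 c2 cpl X * cond_unif R (Cvc E P v c2) X sg); last first.
      rewrite (bigID (consistent sg)) /= [X in _ + X]big1 ?addr0 //.
      by move=> X nc; rewrite cond_unif_nc // mulr0.
    rewrite sum_outY.
    rewrite (run_exp Hcpl C1ne C2ne #|V| (g := fun t => cond_unif R (Cvc E P v c2) (stY t) sg)).
      by rewrite /stY /= /cond_unif (CX_C1 _ _ i2) CX_init.
    by move=> s Is; exact: (step_martY k2 rk Hcpl sg Is).
Qed.
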